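(* Let $H=(V,E)$ be an $n$-uniform hypergraph, $r\ge 2$, and $k\ge 1$. The number of sequences $(C_1,\dots,C_k)$ of edges of $H$ for which there exist an injective $\sigma:V\to[0,1)$ and a color $i\in\{k,\dots,r\}$ such that $(C_1,\dots,C_k)$ is an ordered $k$-chain for color $i$ is at most $2\binom{|E|}{k}$.
   Context: Setting: $n\ge 3$, $r\ge2$ integers, $H=(V,E)$ an $n$-uniform hypergraph, colors $\{1,\dots,r\}$. Put $p=\frac{r-1}{r}\cdot\frac{\ln(n/\ln n)}{n}$. Partition $[0,1)$ into consecutive half-open intervals $\Delta_1,\delta_1,\Delta_2,\delta_2,\dots,\delta_{r-1},\Delta_r$ (left to right), $\Delta_i=\big[(i-1)(\tfrac{1-p}{r}+\tfrac{p}{r-1}),\ i\tfrac{1-p}{r}+(i-1)\tfrac{p}{r-1}\big)$, $\delta_i=\big[i\tfrac{1-p}{r}+(i-1)\tfrac{p}{r-1},\ i(\tfrac{1-p}{r}+\tfrac{p}{r-1})\big)$. For injective $\sigma:V\to[0,1)$, a vertex $v$ belongs to interval $I$ if $\sigma(v)\in I$; the first (last) vertex of a vertex set is its vertex of smallest (largest) weight. Algorithm 1: every vertex in $\Delta_i$ gets color $i$; then vertices in $\bigcup_i\delta_i$ are processed in increasing weight order, and $v\in\delta_i$ gets color $i$ unless some edge containing $v$ has all its other vertices already colored $i$, in which case $v$ gets color $i+1$; the result is $C^0$. For $1\le k\le i\le r$, a sequence $(C_1,\dots,C_k)$ of edges is an ordered $k$-chain for color $i$ if: (a) the first vertex of $C_1$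 lies in $\Delta_{i-k+1}$; (b) for each $j=1,\dots,k-1$, the last vertex of $C_j$ equals the first vertex of $C_{j+1}$, lies in $\delta_{i-k+j}$, and all vertices of $C_j$ other than its last vertex have color $i-k+j$ in $C^0$; (c) all vertices of $C_k$ have color $i$ in $C^0$. *)

(* Defs.v *)
From HB Require Import structures.
From mathcomp Require Import all_boot all_order all_algebra.
From mathcomp Require Import reals exp.
Set Implicit Arguments. Unset Strict Implicit. Unset Printing Implicit Defensive.
Import Order.TTheory GRing.Theory Num.Theory.
Local Open Scope ring_scope.

Section Coloring.
Variables (R : realType) (V : finType) (E : {set {set V}}) (n r : nat)
  (sigma : V -> R).

Definition pp : R := ((r%:R - 1) / r%:R) * (ln (n%:R / ln n%:R) / n%:R).
Definition aa : R := (1 - pp) / r%:R.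
Definition bb : R := pp / (r%:R - 1).

Definition inDelta (i : nat) (x : R) : bool :=
  ((i%:R - 1) * (aa + bb) <= x) && (x < i%:R * aa + (i%:R - 1) * bb).
Definition indelta (i : nat) (x : R) : bool :=
  (i%:R * aa + (i%:R - 1) * bb <= x) && (x < i%:R * (aa + bb)).

Definition Delta_index (v : V) : nat :=
  head 0%N [seq i <- iota 1 r | inDelta i (sigma v)].
Definition delta_index (v : V) : nat :=
  head 0%N [seq i <- iota 1 r.-1 | indelta i (sigma v)].
Definition in_some_delta (v : V) : bool :=
  has (fun i => indelta i (sigma v)) (iota 1 r.-1).

(* Colour 0 means "not yet coloured".  Step 1 of Algorithm 1:
   vertices in Delta_i get colour i. *)
Definition color_init : V -> nat := Delta_index.

Definition color_step (c : V -> nat) (v : V) : V -> nat :=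
  let i := delta_index v in
  let ci := if [exists e in E, (v \in e) &&
                  [forall u in e, (u != v) ==> (c u == i)]]
            then i.+1 else i in
  fun u => if u == v then ci else c u.

Definition delta_order : seq V :=
  sort (fun u v => sigma u <= sigma v) [seq v <- enum V | in_some_delta v].

Definition C0 : V -> nat := foldl color_step color_init delta_order.

Definition isFirst (C : {set V}) (v : V) : bool :=
  (v \in C) && [forall u in C, sigma v <= sigma u].
Definition isLast (C : {set V}) (v : V) : bool :=
  (v \in C) && [forall u in C, sigma u <= sigma v].

(* (C_1,...,C_k) = C (with C_j = nth set0 C (j-1)) is an ordered k-chain
   for colour i, k = size C *)
Definition ordered_chain (C : seq {set V}) (i : nat) : Prop :=
  let k := size C in
  [/\ (1 <= k <= i)%N, (i <= r)%N,
   (exists v, isFirst (nth set0 C 0) v && inDelta (i - k + 1)%N (sigma v)),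
   (forall j, (1 <= j <= k.-1)%N ->
      exists v, [/\ isLast (nth set0 C j.-1) v, isFirst (nth set0 C j) v,
                    indelta (i - k + j)%N (sigma v) &
                    forall u, u \in nth set0 C j.-1 -> u != v ->
                              C0 u = (i - k + j)%N])
   & forall u, u \in nth set0 C k.-1 -> C0 u = i].

End Coloring.

(* Main.v *)
Require Import Defs.
From HB Require Import structures.
From mathcomp Require Import all_boot all_order all_algebra.
From mathcomp Require Import reals exp.
From mathcomp Require Import zify.
Import Order.TTheory GRing.Theory Num.Theory.
Set Implicit Arguments. Unset Strict Implicit.
Ltac slia := intros; repeat match goal with H : context[size _] |- _ => revert H end;
  repeat match goal with |- context[size ?s] =>
    let k := fresh "k" in set k := size s; clearbody k end; intros; lia.

Definition adjP (T : finType) (x0 : T) (M : rel T) (s : seq T) :=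
  uniq s /\ (forall j l, j < size s -> l < size s -> j != l ->
     M (nth x0 s j) (nth x0 s l) = (l == j.+1) || (j == l.+1)).

Definition degX (T : finType) (M : rel T) (X : {set T}) (x : T) :=
  #|[set y in X | (y != x) && M x y]|.

Definition bX (T : finType) (x0 : T) (s : seq T) :=
  (enum_rank (nth x0 s 0) <= enum_rank (nth x0 s (size s).-1))%N.

Lemma nbP (T : finType) (x0 : T) (M : rel T) (t : seq T) j y :
  adjP x0 M t -> j < size t -> y \in t -> y != nth x0 t j ->
  M (nth x0 t j) y -> exists2 l, l < size t & y = nth x0 t l /\ (l = j.+1 \/ j = l.+1).
Proof.
move=> [ut ht] hj /(nthP x0) [l hl <-] hne hM.
exists l => //; split => //.
have hjl : j != l by apply: contra hne => /eqP ->.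
move: hM; rewrite ht // => /orP [] /eqP ->; by [left|right].
Qed.

Lemma deg0 (T : finType) (x0 : T) (M : rel T) (t : seq T) :
  adjP x0 M t -> 0 < size t -> degX M [set y in t] (nth x0 t 0) <= 1.
Proof.
move=> ha h0; rewrite /degX -(cards1 (nth x0 t 1)); apply: subset_leq_card.
apply/subsetP => y; rewrite !inE => /andP [hy /andP [hne hM]].
have [l hl [-> [->|]]] := nbP ha h0 hy hne hM => //.
Qed.

Lemma degL (T : finType) (x0 : T) (M : rel T) (t : seq T) :
  adjP x0 M t -> 0 < size t -> degX M [set y in t] (nth x0 t (size t).-1) <= 1.
Proof.
move=> ha h0; rewrite /degX -(cards1 (nth x0 t (size t).-2)); apply: subset_leq_card.
apply/subsetP => y; rewrite !inE => /andP [hy /andP [hne hM]].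
have hk : (size t).-1 < size t by slia.
have [l hl [-> [hl'|hl']]] := nbP ha hk hy hne hM; first lia.
by rewrite (_ : (size t).-2 = l) //; slia.
Qed.

Lemma degI (T : finType) (x0 : T) (M : rel T) (s : seq T) j :
  adjP x0 M s -> 0 < j -> j.+1 < size s -> 2 <= degX M [set y in s] (nth x0 s j).
Proof.
case: j => // j.
move=> [us hs] _ hj /=.
have -> : 2 = #|[set nth x0 s j; nth x0 s j.+2]|.
  rewrite cards2 nth_uniq; [|slia|slia|done].
  by case: eqP => //; lia.
apply: subset_leq_card; apply/subsetP => y; rewrite !inE => /orP [] /eqP ->.
- rewrite mem_nth /=; last slia.
  rewrite nth_uniq; [|slia|slia|done].
  case: eqP => [|_] /=; first lia.
  by rewrite hs ?eqxx ?orbT //; slia.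
- rewrite mem_nth /=; last slia.
  rewrite nth_uniq; [|slia|slia|done].
  case: eqP => [|_] /=; first lia.
  by rewrite hs ?eqxx //; slia.
Qed.

Lemma endP (T : finType) (x0 : T) (M : rel T) (s : seq T) x :
  adjP x0 M s -> x \in s -> degX M [set y in s] x <= 1 ->
  x = nth x0 s 0 \/ x = nth x0 s (size s).-1.
Proof.
move=> ha /(nthP x0) [j hj <-] hd.
case: (posnP j) => [->|hj0]; first by left.
case: (ltnP j.+1 (size s)) => hjs.
  by move: (degI ha hj0 hjs); rewrite ltnNge hd.
right; congr nth; slia.
Qed.

Lemma adj_inj (T : finType) (x0 : T) (M : rel T) (s t : seq T) :
  adjP x0 M s -> adjP x0 M t -> size s = size t -> 0 < size s ->
  [set y in s] = [set y in t] -> bX x0 s = bX x0 t -> s = t.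
Proof.
move=> has hat hst hs0 hX hb.
have memt : forall y, y \in t -> y \in s.
  move=> y hy; have : y \in [set y in t] by rewrite inE.
  by rewrite -hX inE.
have ht0 : 0 < size t by rewrite -hst.
have [ut htt] := hat; have [us hss] := has.
have e0 : nth x0 t 0 = nth x0 s 0.
  have hd0 := deg0 hat ht0; rewrite -hX in hd0.
  have := endP has (memt _ (mem_nth x0 ht0)) hd0.
  case => // e1.
  case: (ltnP 1 (size t)) => h1; last first.
    by move: e1; rewrite (_ : (size s).-1 = 0) //; slia.
  have hdL := degL hat ht0; rewrite -hX in hdL.
  have tne : nth x0 t 0 != nth x0 t (size t).-1 by rewrite nth_uniq //; slia.
  have sne : nth x0 s 0 != nth x0 s (size s).-1 by rewrite nth_uniq //; slia.
  have hL : (size t).-1 < size t by slia.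
  have [eL|eL] := endP has (memt _ (mem_nth x0 hL)) hdL; last first.
    by move: tne; rewrite e1 eL hst eqxx.
  move: hb; rewrite /bX e1 eL => hb.
  have : (enum_rank (nth x0 s 0) : nat) != enum_rank (nth x0 s (size s).-1).
    apply: contra sne => /eqP h; apply/eqP/enum_rank_inj/val_inj; exact h.
  move: hb.
  set a := (enum_rank (nth x0 s 0) : nat).
  set b := (enum_rank (nth x0 s (size s).-1) : nat).
  clearbody a b.
  case: leqP => h2; case: leqP => h3 //= _; move/eqP => ? ; exfalso; lia.
have key : forall m j, j <= m -> j < size s -> nth x0 t j = nth x0 s j.
  elim=> [|m IH] j hjm hj.
    by rewrite (_ : j = 0) //; slia.
  case: (leqP j m) => hjm'; first exact: IH.
  have -> : j = m.+1 by slia.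
  have hm : m < size s by slia.
  have hmt : m.+1 < size t by slia.
  have [l hl hsl] := nthP x0 (memt _ (mem_nth x0 hmt)).
  have hMt : M (nth x0 t m) (nth x0 t m.+1).
    by rewrite htt ?eqxx //; slia.
  rewrite IH // -hsl in hMt.
  have hml : m != l.
    apply/negP => /eqP eml; move: hsl; rewrite -eml -(IH m) // => /eqP.
    by rewrite nth_uniq //; slia.
  move: hMt; rewrite hss // => /orP [] /eqP e.
    by rewrite -hsl e.
  exfalso; move: hsl; rewrite -(IH l) //; last slia.
  move=> /eqP; rewrite nth_uniq //; slia.
apply: (@eq_from_nth _ x0) => // j hj; symmetry; apply: (key j) => //.
Qed.
Lemma FL (R : realType) (V : finType) (sigma : V -> R) (X : {set V}) v :
  injective sigma -> isFirst sigma X v -> isLast sigma X v -> (#|X| <= 1)%N.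
Proof.
move=> inj /andP [_ /forall_inP h1] /andP [_ /forall_inP h2].
rewrite -(cards1 v); apply: subset_leq_card; apply/subsetP => u hu.
rewrite inE; apply/eqP/inj/le_anti; rewrite h1 ?h2 //.
Qed.


Lemma chain_col (R : realType) (V : finType) (sigma : V -> R) (c : V -> nat)
  (C : seq {set V}) (i : nat) :
  injective sigma ->
  (forall j, j < size C -> 2 <= #|nth set0 C j|) ->
  size C <= i ->
  (forall j, j.+1 < size C -> exists v, [/\ isLast sigma (nth set0 C j) v,
      isFirst sigma (nth set0 C j.+1) v &
      forall u, u \in nth set0 C j -> u != v -> c u = i - size C + j.+1]) ->
  (forall u, u \in nth set0 C (size C).-1 -> c u = i) ->
  forall j x, j < size C -> x \in nth set0 C j ->
    c x = i - size C + j.+1 \/ c x = i - size C + j.+2.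
Proof.
move=> inj hsz hki hb hc j x hj hx.
case: (ltnP j.+1 (size C)) => hj1; last first.
  left; rewrite hc; first slia.
  by rewrite (_ : (size C).-1 = j) //; slia.
have [v [hL hF hcol]] := hb j hj1.
case: (eqVneq x v) => [exv|hxv]; last by left; apply: hcol.
right; subst x.
have hv : v \in nth set0 C j.+1 by case/andP: hF.
case: (ltnP j.+2 (size C)) => hj2; last first.
  rewrite hc; first slia.
  by rewrite (_ : (size C).-1 = j.+1) //; slia.
have [v' [hL' hF' hcol']] := hb j.+1 hj2.
case: (eqVneq v v') => [evv|hvv]; last by rewrite hcol'.
subst v'.
have := FL inj hF hL'; have := hsz j.+1 hj1; slia.
Qed.

Lemma chain_adj (R : realType) (V : finType) (sigma : V -> R) (c : V -> nat)
  (C : seq {set V}) (i : nat) :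
  injective sigma ->
  (forall j, j < size C -> 2 <= #|nth set0 C j|) ->
  size C <= i ->
  (forall j, j.+1 < size C -> exists v, [/\ isLast sigma (nth set0 C j) v,
      isFirst sigma (nth set0 C j.+1) v &
      forall u, u \in nth set0 C j -> u != v -> c u = i - size C + j.+1]) ->
  (forall u, u \in nth set0 C (size C).-1 -> c u = i) ->
  adjP set0 (fun X Y : {set V} => X :&: Y != set0) C.
Proof.
move=> inj hsz hki hb hc.
have col := chain_col inj hsz hki hb hc.
have disj : forall j l x, j.+2 <= l -> l < size C -> x \in nth set0 C j ->
    x \in nth set0 C l -> False.
  move=> j l x hjl hl hxj hxl.
  have := col j x ltac:(slia) hxj; have := col l x hl hxl; slia.
have meet : forall j, j.+1 < size C -> nth set0 C j :&: nth set0 C j.+1 != set0.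
  move=> j hj; have [v [hL hF _]] := hb j hj.
  apply/set0Pn; exists v; rewrite inE; case/andP: hL => -> _; by case/andP: hF.
have disj' : forall j l, j.+2 <= l -> l < size C -> (nth set0 C j :&: nth set0 C l != set0) = false.
  move=> j l hjl hl; apply/negbTE; rewrite negbK; apply/eqP/setP => x.
  rewrite !inE; apply/negbTE/andP => [[hx1 hx2]]; exact: disj hjl hl hx1 hx2.
have neq : forall j l, j < l -> l < size C -> nth set0 C j != nth set0 C l.
  move=> j l hjl hl; apply/eqP => heq.
  case: (eqVneq l j.+1) => [elj|nlj].
    subst l; have [v [hL hF _]] := hb j hl; rewrite -heq in hF.
    have := FL inj hF hL; have := hsz j ltac:(slia); slia.
  have /set0Pn [x hx] : nth set0 C j != set0.
    by rewrite -card_gt0; have := hsz j ltac:(slia); slia.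
  apply: (disj j l x) => //; [slia | by rewrite -heq].
split.
  apply/(uniqP set0) => j l hj hl heq.
  have hj' : j < size C := hj; have hl' : l < size C := hl.
  case: (ltngtP j l) => // hjl.
    by move: (neq j l hjl hl'); rewrite heq eqxx.
  by move: (neq l j hjl hj'); rewrite heq eqxx.
move=> j l hj hl hjl /=.
case: (ltngtP j l) => hjl'.
- case: (eqVneq l j.+1) => [->|nlj]; first by rewrite meet ?eqxx //; slia.
  rewrite disj' //; last slia.
  symmetry; apply/negbTE/norP; split; apply/eqP; slia.
- rewrite setIC.
  case: (eqVneq j l.+1) => [->|nlj]; first by rewrite meet ?eqxx ?orbT //; slia.
  rewrite disj' //; last slia.
  symmetry; apply/negbTE/norP; split; apply/eqP; slia.
- by move: hjl; rewrite hjl' eqxx.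
Qed.

Unset Implicit Arguments.
Unset Strict Implicit.
Local Open Scope ring_scope.

Theorem lemma1 (R : realType) (V : finType) (E : {set {set V}}) (n r k : nat)
  (hn : (3 <= n)%N) (hr : (2 <= r)%N) (hk : (1 <= k)%N)
  (huni : forall e, e \in E -> #|e| = n)
  (S : {set k.-tuple {set V}})
  (hS : forall C, C \in S ->
     (forall e, e \in C -> e \in E) /\
     exists sigma : V -> R,
       [/\ injective sigma, (forall v, 0 <= sigma v < 1) &
           exists i, (k <= i <= r)%N /\ ordered_chain E n r sigma C i]) :
  (#|S| <= 2 * 'C(#|E|, k))%N.
Proof.
pose M := fun X Y : {set V} => X :&: Y != set0.
have hadj : forall C, C \in S -> adjP set0 M C.
  move=> C /hS [hE [sigma [inj _ [i [/andP [hki hir] hch]]]]].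
  move: hch; rewrite /ordered_chain /= => -[h1 h2 h3 h4 h5].
  apply: (chain_adj (c := C0 E n r sigma) (i := i) inj).
  - move=> j hj; rewrite huni; first by apply: leq_trans hn.
    exact: hE (mem_nth set0 hj).
  - by rewrite size_tuple.
  - move=> j hj1.
    have [v [a b _ d]] := h4 j.+1 ltac:(slia).
    by exists v; split.
  - exact: h5.
pose f := fun C : k.-tuple {set V} => ([set x in (C : seq {set V})], bX set0 C).
have finj : {in S &, injective f}.
  move=> C D hC hD [e1 e2]; apply: val_inj.
  apply: (adj_inj (hadj C hC) (hadj D hD)) => //; rewrite ?size_tuple //.
have sub : f @: S \subset setX [set A : {set {set V}} | A \subset E & #|A| == k] setT.
  apply/subsetP => _ /imsetP [C hC ->]; rewrite !inE andbT.
  apply/andP; split.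
    apply/subsetP => x; rewrite inE; exact: (hS C hC).1.
  rewrite cardsE; apply/eqP; rewrite (card_uniqP _) ?size_tuple //.
  exact: (hadj C hC).1.
rewrite -(card_in_imset finj); apply: (leq_trans (subset_leq_card sub)).
by rewrite cardsX cards_draws cardsT card_bool mulnC.
Qed.
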